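(* Let $\mathcal{M}$ be an $L5$-model and let $\gamma\colon V\to M$ be an assignment in $\mathcal{M}$. Then there exist an $L5$-frame $(W,R)$, an $R$-maximal world $w_T\in W$ and an assignment $g\colon V\to\mathrm{Pow}(W)$ in $(W,R)$ such that for all formulas $\varphi$: $$(\mathcal{M},\gamma)\vDash\varphi \iff (w_T,g)\vDash\varphi.$$
   Context: Formulas are built from a countable set $V$ of propositional variables using $\wedge,\vee,\rightarrow,\bot$ and the unary modal operator $\square$; $\top$ abbreviates $\bot\rightarrow\bot$. An $L5$-model is a structure $\mathcal{M}=(M,\mathit{TRUE},f_\bot,f_\top,f_\rightarrow,f_\vee,f_\wedge,f_\square)$ such that $(M,f_\bot,f_\top,f_\rightarrow,f_\vee,f_\wedge)$ is a Heyting algebra (bottom $f_\bot$, top $f_\top$, relative pseudo-complement $f_\rightarrow$, lattice order $\le$). Moreover, $\mathit{TRUE}\subseteq M$ is an ultrafilter, and $f_\square\colon M\to M$ satisfies, for all $m,m',m''\in M$: (i) $f_\square(m)\le m$; (ii) $f_\square(f_\rightarrow(m,m'))\le f_\rightarrow(f_\square(f_\rightarrow(m',m'')),f_\square(f_\rightarrow(m,m'')))$; (iii) $f_\square(f_\vee(m,m'))\le f_\vee(f_\square(m),f_\square(m'))$; (iv) $f_\square(m)\in\mathit{TRUE}$ iff $m=f_\top$; (v) $f_\square(m)=f_\top$ if $m=f_\top$, and $f_\square(m)=f_\bot$ otherwise. An assignment $\gamma\colon V\to M$ extends to all formulas by: - $\gamma(\bot)=f_\bot$; - $\gamma(\square\varphi)=f_\square(\gamma(\varphi))$;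 - $\gamma(\varphi*\psi)=f_*(\gamma(\varphi),\gamma(\psi))$ for $*\in\{\vee,\wedge,\rightarrow\}$. Satisfaction is $(\mathcal{M},\gamma)\vDash\varphi$ iff $\gamma(\varphi)\in\mathit{TRUE}$. An $L5$-frame is a pair $(W,R)$ with the following properties: - $W$ is a non-empty set; - $R$ is a partial order on $W$; - there is an $R$-smallest element $w_B$; - every $R$-chain has an upper bound in $W$. An assignment in $(W,R)$ is a map $g\colon V\to\mathrm{Pow}(W)$ with $wRw'$ and $w\in g(x)$ implying $w'\in g(x)$. Kripke satisfaction is defined as follows: - $(w,g)\nvDash\bot$; - $(w,g)\vDash x$ iff $w\in g(x)$; - $\vee,\wedge$ are evaluated pointwise; - $(w,g)\vDash\varphi\rightarrow\psi$ iff for all $w'$ with $wRw'$, $(w',g)\vDash\varphi$ implies $(w',g)\vDash\psi$; - $(w,g)\vDash\square\varphi$ iff $(w_B,g)\vDash\varphi$. *)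

(* Defs.v *)
Definition var := nat.

Inductive formula : Type :=
| FVar : var -> formula
| FBot : formula
| FAnd : formula -> formula -> formula
| FOr  : formula -> formula -> formula
| FImp : formula -> formula -> formula
| FBox : formula -> formula.

Definition FTop : formula := FImp FBot FBot.

Record L5Model : Type := {
  M : Type;
  TRUE : M -> Prop;
  f_bot : M;
  f_top : M;
  f_imp : M -> M -> M;
  f_or  : M -> M -> M;
  f_and : M -> M -> M;
  f_box : M -> M
}.

Definition mle (A : L5Model) (x y : M A) : Prop := f_and A x y = x.

Definition is_heyting (A : L5Model) : Prop :=
  (forall x y z, f_and A x (f_and A y z) = f_and A (f_and A x y) z) /\
  (forall x y z, f_or A x (f_or A y z) = f_or A (f_or A x y) z) /\
  (forall x y, f_and A x y = f_and A y x) /\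
  (forall x y, f_or A x y = f_or A y x) /\
  (forall x y, f_and A x (f_or A x y) = x) /\
  (forall x y, f_or A x (f_and A x y) = x) /\
  (forall x, mle A (f_bot A) x) /\
  (forall x, mle A x (f_top A)) /\
  (forall x y z, mle A (f_and A z x) y <-> mle A z (f_imp A x y)).

Definition is_filter (A : L5Model) (F : M A -> Prop) : Prop :=
  F (f_top A) /\
  (forall x y, F x -> mle A x y -> F y) /\
  (forall x y, F x -> F y -> F (f_and A x y)).

Definition is_proper_filter (A : L5Model) (F : M A -> Prop) : Prop :=
  is_filter A F /\ ~ F (f_bot A).

Definition is_ultrafilter (A : L5Model) (F : M A -> Prop) : Prop :=
  is_proper_filter A F /\
  (forall G, is_proper_filter A G -> (forall x, F x -> G x) -> forall x, G x -> F x).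

Definition is_L5_model (A : L5Model) : Prop :=
  is_heyting A /\
  is_ultrafilter A (TRUE A) /\
  (forall m, mle A (f_box A m) m) /\
  (forall m m' m'',
     mle A (f_box A (f_imp A m m'))
           (f_imp A (f_box A (f_imp A m' m'')) (f_box A (f_imp A m m'')))) /\
  (forall m m', mle A (f_box A (f_or A m m')) (f_or A (f_box A m) (f_box A m'))) /\
  (forall m, TRUE A (f_box A m) <-> m = f_top A) /\
  (forall m, (m = f_top A -> f_box A m = f_top A) /\
             (m <> f_top A -> f_box A m = f_bot A)).

Fixpoint eval (A : L5Model) (gamma : var -> M A) (phi : formula) : M A :=
  match phi with
  | FVar x => gamma x
  | FBot => f_bot A
  | FAnd p q => f_and A (eval A gamma p) (eval A gamma q)
  | FOr p q => f_or A (eval A gamma p) (eval A gamma q)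
  | FImp p q => f_imp A (eval A gamma p) (eval A gamma q)
  | FBox p => f_box A (eval A gamma p)
  end.

Definition msat (A : L5Model) (gamma : var -> M A) (phi : formula) : Prop :=
  TRUE A (eval A gamma phi).

Definition is_chain {W : Type} (R : W -> W -> Prop) (C : W -> Prop) : Prop :=
  forall x y, C x -> C y -> R x y \/ R y x.

Definition is_L5_frame (W : Type) (R : W -> W -> Prop) (wB : W) : Prop :=
  (* W is non-empty: witnessed by wB *)
  (forall w, R w w) /\
  (forall u v w, R u v -> R v w -> R u w) /\
  (forall u v, R u v -> R v u -> u = v) /\
  (forall w, R wB w) /\
  (forall C : W -> Prop, is_chain R C -> exists b, forall x, C x -> R x b).

Definition is_frame_assignment {W : Type} (R : W -> W -> Prop)
  (g : var -> W -> Prop) : Prop :=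
  forall x w w', R w w' -> g x w -> g x w'.

Fixpoint ksat {W : Type} (R : W -> W -> Prop) (wB : W) (g : var -> W -> Prop)
  (w : W) (phi : formula) : Prop :=
  match phi with
  | FVar x => g x w
  | FBot => False
  | FAnd p q => ksat R wB g w p /\ ksat R wB g w q
  | FOr p q => ksat R wB g w p \/ ksat R wB g w q
  | FImp p q => forall w', R w w' -> ksat R wB g w' p -> ksat R wB g w' q
  | FBox p => ksat R wB g wB p
  end.

(* Main.v *)
Require Import Defs.
From Stdlib Require Import Classical FunctionalExtensionality PropExtensionality ProofIrrelevance Lia.
From mathcomp Require choice.

Module Enum.
Import choice.
Fixpoint enc (p : formula) : GenTree.tree nat :=
  match p with
  | FVar x => GenTree.Leaf x
  | FBot => GenTree.Node 0 nil
  | FAnd p q => GenTree.Node 1 (cons (enc p) (cons (enc q) nil))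
  | FOr p q => GenTree.Node 2 (cons (enc p) (cons (enc q) nil))
  | FImp p q => GenTree.Node 3 (cons (enc p) (cons (enc q) nil))
  | FBox p => GenTree.Node 4 (cons (enc p) nil)
  end.
Fixpoint dec (t : GenTree.tree nat) : formula :=
  match t with
  | GenTree.Leaf x => FVar x
  | GenTree.Node 1 (cons t1 (cons t2 nil)) => FAnd (dec t1) (dec t2)
  | GenTree.Node 2 (cons t1 (cons t2 nil)) => FOr (dec t1) (dec t2)
  | GenTree.Node 3 (cons t1 (cons t2 nil)) => FImp (dec t1) (dec t2)
  | GenTree.Node 4 (cons t1 nil) => FBox (dec t1)
  | _ => FBot
  end.
Lemma decK p : dec (enc p) = p.
Proof. induction p; simpl; congruence. Qed.
Definition enum (n : nat) : formula :=
  match (unpickle n : option (GenTree.tree nat)) with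
  | Some t => dec t | None => FBot end.
Lemma enum_surj p : exists n, enum n = p.
Proof. exists (pickle (enc p)). unfold enum. rewrite pickleK. apply decK. Qed.
End Enum.
Import Enum.

Ltac hey H := destruct H as (Ha&Hoa&Hc&Hoc&Hab1&Hab2&Hb&Ht&Hr).

Section L.
End L.

Lemma meet_idem A (H : is_heyting A) x : f_and A x x = x.
Proof. hey H. pose proof (Hab2 x x) as E1. pose proof (Hab1 x (f_and A x x)) as E2.
  rewrite E1 in E2. exact E2. Qed.

Lemma join_idem A (H : is_heyting A) x : f_or A x x = x.
Proof. hey H. pose proof (Hab1 x x) as E1. pose proof (Hab2 x (f_or A x x)) as E2.
  rewrite E1 in E2. exact E2. Qed.

Lemma le_refl A (H : is_heyting A) x : mle A x x.
Proof. apply meet_idem; auto. Qed.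

Lemma le_trans A (H : is_heyting A) x y z : mle A x y -> mle A y z -> mle A x z.
Proof. hey H. unfold mle. intros E1 E2.
  rewrite <- E1 at 1. rewrite <- Ha, E2. exact E1. Qed.

Lemma le_antisym A (H : is_heyting A) x y : mle A x y -> mle A y x -> x = y.
Proof. hey H. unfold mle. intros E1 E2. transitivity (f_and A x y); [symmetry; exact E1 | rewrite Hc; exact E2]. Qed.

Lemma meet_lb1 A (H : is_heyting A) x y : mle A (f_and A x y) x.
Proof. pose proof (meet_idem A H x) as I. hey H. unfold mle.
  rewrite <- Ha, (Hc y x), Ha, I. reflexivity. Qed.

Lemma meet_lb2 A (H : is_heyting A) x y : mle A (f_and A x y) y.
Proof. pose proof (meet_idem A H y) as I. hey H. unfold mle.
  rewrite <- Ha, I. reflexivity. Qed.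

Lemma meet_glb A (H : is_heyting A) x y z : mle A z x -> mle A z y -> mle A z (f_and A x y).
Proof. hey H. unfold mle. intros E1 E2. rewrite Ha, E1, E2. reflexivity. Qed.

Lemma le_join A (H : is_heyting A) x z : mle A x z -> f_or A x z = z.
Proof. hey H. unfold mle. intro E. rewrite <- E at 1.
  rewrite (Hoc (f_and A x z) z), (Hc x z). apply Hab2. Qed.

Lemma join_le A (H : is_heyting A) x z : f_or A x z = z -> mle A x z.
Proof. hey H. unfold mle. intro E. rewrite <- E. apply Hab1. Qed.

Lemma join_ub1 A (H : is_heyting A) x y : mle A x (f_or A x y).
Proof. hey H. apply Hab1. Qed.

Lemma join_ub2 A (H : is_heyting A) x y : mle A y (f_or A x y).
Proof. hey H. rewrite Hoc. apply Hab1. Qed.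

Lemma join_lub A (H : is_heyting A) x y z : mle A x z -> mle A y z -> mle A (f_or A x y) z.
Proof. intros E1 E2. apply join_le; auto. apply le_join in E1; auto. apply le_join in E2; auto.
  hey H. rewrite <- Hoa, E2, E1. reflexivity. Qed.

Lemma bot_le A (H : is_heyting A) x : mle A (f_bot A) x.
Proof. hey H. auto. Qed.
Lemma le_top A (H : is_heyting A) x : mle A x (f_top A).
Proof. hey H. auto. Qed.
Lemma resid A (H : is_heyting A) x y z : mle A (f_and A z x) y <-> mle A z (f_imp A x y).
Proof. hey H. auto. Qed.

Lemma meet_mono A (H : is_heyting A) x x' y : mle A x x' -> mle A (f_and A x y) (f_and A x' y).
Proof. intro E. apply meet_glb; auto. eapply le_trans; eauto. apply meet_lb1; auto.
  apply meet_lb2; auto. Qed.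

Lemma meet_comm A (H : is_heyting A) x y : f_and A x y = f_and A y x.
Proof. hey H. auto. Qed.

Lemma mp_le A (H : is_heyting A) a b : mle A (f_and A a (f_imp A a b)) b.
Proof. rewrite meet_comm; auto. apply resid; auto. apply le_refl; auto. Qed.

Lemma meet_join_le A (H : is_heyting A) g x y b :
  mle A (f_and A g x) b -> mle A (f_and A g y) b -> mle A (f_and A g (f_or A x y)) b.
Proof. intros E1 E2. rewrite meet_comm; auto. apply resid; auto.
  apply join_lub; auto; apply resid; auto; rewrite meet_comm; auto. Qed.

Lemma top_meet A (H : is_heyting A) y : f_and A (f_top A) y = y.
Proof. rewrite meet_comm; auto. apply le_top; auto. Qed.

Lemma imp_bot_bot A (H : is_heyting A) : f_imp A (f_bot A) (f_bot A) = f_top A.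
Proof. apply le_antisym; auto. apply le_top; auto. apply resid; auto. apply meet_lb2; auto. Qed.

Definition inS A gamma (z : M A) := exists p, eval A gamma p = z.

Definition Filt A (P F : M A -> Prop) :=
  (forall z, F z -> P z) /\ F (f_top A) /\
  (forall x y, F x -> mle A x y -> P y -> F y) /\
  (forall x y, F x -> F y -> F (f_and A x y)).

Definition gen A (P F : M A -> Prop) c z := P z /\ exists g, F g /\ mle A (f_and A g c) z.

Lemma gen_filt A (H : is_heyting A) P F c :
  P (f_top A) -> (forall x y, P x -> P y -> P (f_and A x y)) -> Filt A P F -> Filt A P (gen A P F c).
Proof.
  intros Pt Pm (F1&F2&F3&F4). split; [|split; [|split]].
  - intros z [? _]; auto.
  - split; auto. exists (f_top A); split; auto. apply le_top; auto.
  - intros x y [Px [g [Fg E]]] E2 Py. split; auto. exists g; split; auto. eapply le_trans; eauto.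
  - intros x y [Px [g [Fg E]]] [Py [g' [Fg' E']]]. split; auto. exists (f_and A g g'). split; auto.
    apply meet_glb; auto.
    + eapply le_trans; eauto. apply meet_mono; auto. apply meet_lb1; auto.
    + eapply le_trans; eauto. apply meet_mono; auto. apply meet_lb2; auto.
Qed.

Lemma gen_incl A (H : is_heyting A) P F c z : Filt A P F -> F z -> gen A P F c z.
Proof. intros (F1&_) Fz. split; auto. exists z. split; auto. apply meet_lb1; auto. Qed.

Lemma gen_c A (H : is_heyting A) P F c : Filt A P F -> P c -> gen A P F c c.
Proof. intros (F1&F2&_) Pc. split; auto. exists (f_top A). split; auto. apply meet_lb2; auto. Qed.

Lemma gen_mono A P F F' c z : (forall x, F x -> F' x) -> gen A P F c z -> gen A P F' c z.
Proof. intros I [Pz [g [Fg E]]]. split; auto. exists g; auto. Qed.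

Lemma Filt_ext A P F F' : (forall z, F z <-> F' z) -> Filt A P F -> Filt A P F'.
Proof. intros E (F1&F2&F3&F4). split; [|split; [|split]].
  - intros z Hz; apply F1, E; auto.
  - apply E; auto.
  - intros x y Hx; apply E in Hx; intros; apply E; eauto.
  - intros x y Hx Hy; apply E; apply E in Hx; apply E in Hy; auto.
Qed.

Definition isWorld A gamma (w : M A -> Prop) :=
  Filt A (inS A gamma) w /\ ~ w (f_bot A) /\
  (forall x y, w (f_or A x y) -> inS A gamma x -> inS A gamma y -> w x \/ w y).

Lemma inS_top A (H : is_heyting A) gamma : inS A gamma (f_top A).
Proof. exists FTop. simpl. apply imp_bot_bot; auto. Qed.
Lemma inS_and A gamma x y : inS A gamma x -> inS A gamma y -> inS A gamma (f_and A x y).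
Proof. intros [p <-] [q <-]. exists (FAnd p q). reflexivity. Qed.
Lemma inS_or A gamma x y : inS A gamma x -> inS A gamma y -> inS A gamma (f_or A x y).
Proof. intros [p <-] [q <-]. exists (FOr p q). reflexivity. Qed.
Lemma inS_imp A gamma x y : inS A gamma x -> inS A gamma y -> inS A gamma (f_imp A x y).
Proof. intros [p <-] [q <-]. exists (FImp p q). reflexivity. Qed.
Lemma inS_eval A gamma p : inS A gamma (eval A gamma p).
Proof. exists p; auto. Qed.

Fixpoint stage A gamma (F : M A -> Prop) (b : M A) (n : nat) : M A -> Prop :=
  match n with
  | 0 => F
  | S n => let Fn := stage A gamma F b n in
           let c := eval A gamma (enum n) in
     fun z => (gen A (inS A gamma) Fn c b -> Fn z) /\
              (~ gen A (inS A gamma) Fn c b -> gen A (inS A gamma) Fn c z)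
  end.

Lemma stage_S A gamma F b n :
  let Fn := stage A gamma F b n in let c := eval A gamma (enum n) in
  (gen A (inS A gamma) Fn c b /\ forall z, stage A gamma F b (S n) z <-> Fn z) \/
  (~ gen A (inS A gamma) Fn c b /\ forall z, stage A gamma F b (S n) z <-> gen A (inS A gamma) Fn c z).
Proof.
  intros Fn c. destruct (classic (gen A (inS A gamma) Fn c b)) as [G|G].
  - left. split; auto. intro z. simpl. fold Fn. fold c. split; [intros [h _]; auto | intro; split; tauto].
  - right. split; auto. intro z. simpl. fold Fn. fold c. split; [intros [_ h]; auto | intro; split; tauto].
Qed.

Lemma stage_inv A (H : is_heyting A) gamma F b :
  Filt A (inS A gamma) F -> ~ F b -> forall n,
  Filt A (inS A gamma) (stage A gamma F b n) /\ ~ stage A gamma F b n b.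
Proof.
  intros HF Hb n. induction n as [|n [IH1 IH2]]; [split; auto|].
  destruct (stage_S A gamma F b n) as [[G E]|[G E]].
  - split. eapply Filt_ext; [intro z; symmetry; apply E|]; auto.
    rewrite E; auto.
  - split. eapply Filt_ext; [intro z; symmetry; apply E|]; auto.
    apply gen_filt; auto. apply inS_top; auto. apply inS_and.
    rewrite E; auto.
Qed.

Lemma stage_mono1 A (H : is_heyting A) gamma F b n z :
  Filt A (inS A gamma) F -> ~ F b ->
  stage A gamma F b n z -> stage A gamma F b (S n) z.
Proof.
  intros HF Hb Hz. destruct (stage_inv A H gamma F b HF Hb n) as [I1 _].
  destruct (stage_S A gamma F b n) as [[G E]|[G E]]; apply E; auto.
  apply gen_incl; auto.
Qed.

Lemma stage_mono A (H : is_heyting A) gamma F b n k z :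
  Filt A (inS A gamma) F -> ~ F b ->
  stage A gamma F b n z -> stage A gamma F b (k + n) z.
Proof. intros HF Hb Hz. induction k; simpl; auto. apply stage_mono1; auto. Qed.

Lemma lindenbaum A (H : is_heyting A) gamma F b :
  Filt A (inS A gamma) F -> ~ F b -> inS A gamma b ->
  exists G, isWorld A gamma G /\ (forall z, F z -> G z) /\ ~ G b.
Proof.
  intros HF Hb Sb.
  set (G := fun z => exists n, stage A gamma F b n z).
  assert (HI := stage_inv A H gamma F b HF Hb).
  assert (GF : Filt A (inS A gamma) G).
  { split; [|split; [|split]].
    - intros z [n Hz]. destruct (HI n) as [(X&_) _]. auto.
    - exists 0. apply HF.
    - intros x y [n Hx] E Sy. exists n. destruct (HI n) as [(_&_&X&_) _]. eauto.
    - intros x y [n Hx] [m Hy]. exists (m + n).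
      destruct (HI (m + n)) as [(_&_&_&X) _]. apply X.
      + apply stage_mono; auto.
      + rewrite PeanoNat.Nat.add_comm. apply stage_mono; auto. }
  assert (GB : ~ G b). { intros [n Hn]. destruct (HI n) as [_ X]. auto. }
  assert (Key : forall x, inS A gamma x -> ~ G x -> gen A (inS A gamma) G x b).
  { intros x [p <-] Nx. destruct (enum_surj p) as [n <-].
    destruct (stage_S A gamma F b n) as [[Gb E]|[Gb E]].
    - eapply gen_mono; [|exact Gb]. intros y Hy; exists n; auto.
    - exfalso. apply Nx. exists (S n). apply E. apply gen_c; auto.
      apply HI. apply inS_eval. }
  exists G. split; [split; [exact GF | split] | split].
  - intro Gbot. apply GB. destruct GF as (_&_&X&_). eapply X; eauto. apply bot_le; auto.
  - intros x y Hxy Sx Sy. apply NNPP. intro N. apply GB.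
    destruct (Key x Sx ltac:(tauto)) as [_ [g1 [G1 E1]]].
    destruct (Key y Sy ltac:(tauto)) as [_ [g2 [G2 E2]]].
    destruct GF as (_&_&X&Y). eapply X; [apply Y; [apply Y; [exact G1|exact G2]|exact Hxy]| |exact Sb].
    apply meet_join_le; auto.
    + apply (le_trans A H _ (f_and A g1 x)); [|exact E1]. apply meet_mono; auto. apply meet_lb1; auto.
    + apply (le_trans A H _ (f_and A g2 y)); [|exact E2]. apply meet_mono; auto. apply meet_lb2; auto.
  - intros z Hz. exists 0. exact Hz.
  - exact GB.
Qed.

Lemma top_ne_bot A (HA : is_L5_model A) : f_top A <> f_bot A.
Proof. destruct HA as (_&(((T1&_)&T2)&_)&_). intro E. apply T2. rewrite <- E. exact T1. Qed.

Lemma join_top A (HA : is_L5_model A) x y :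
  f_or A x y = f_top A -> x = f_top A \/ y = f_top A.
Proof.
  intro E. pose proof (top_ne_bot A HA) as NE.
  destruct HA as (H&_&_&_&B3&_&B5).
  apply NNPP. intro N.
  assert (Bx : f_box A x = f_bot A) by (apply B5; tauto).
  assert (By : f_box A y = f_bot A) by (apply B5; tauto).
  assert (Bt : f_box A (f_top A) = f_top A) by (apply B5; auto).
  pose proof (B3 x y) as L. rewrite E, Bt, Bx, By, join_idem in L; auto.
  apply NE. apply le_antisym; auto. apply bot_le; auto.
Qed.

Lemma box_char A (HA : is_L5_model A) m :
  (m = f_top A -> f_box A m = f_top A) /\ (m <> f_top A -> f_box A m = f_bot A).
Proof. destruct HA as (_&_&_&_&_&_&B5). auto. Qed.

Lemma filt_uf A (U : M A -> Prop) : is_filter A U <-> Filt A (fun _ => True) U.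
Proof. unfold is_filter, Filt. split.
  - intros (a&b&c). split; [auto|split; [auto|split; eauto]].
  - intros (_&a&b&c). split; [auto|split; eauto]. Qed.

Lemma uf_gen A (H : is_heyting A) U : is_ultrafilter A U ->
  forall c, ~ U c -> exists t, U t /\ mle A (f_and A t c) (f_bot A).
Proof.
  intros [[UF Ub] Umax] c Nc. apply NNPP. intro N. apply Nc.
  apply filt_uf in UF.
  set (G := gen A (fun _ => True) U c).
  assert (GF : is_proper_filter A G).
  { split. apply filt_uf. apply gen_filt; auto.
    intros [_ [g [Ug E]]]. apply N. exists g; auto. }
  apply (Umax G GF). intros x Ux; apply gen_incl; auto.
  apply gen_c; auto.
Qed.

Lemma uf_prime A (H : is_heyting A) U : is_ultrafilter A U ->
  forall x y, U (f_or A x y) -> U x \/ U y.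
Proof.
  intros HU x y Uxy. apply NNPP. intro N.
  destruct (uf_gen A H U HU x ltac:(tauto)) as [t1 [U1 E1]].
  destruct (uf_gen A H U HU y ltac:(tauto)) as [t2 [U2 E2]].
  destruct HU as [[UF Ub] _]. apply Ub. destruct UF as (_&X&Y).
  eapply X; [apply Y; [apply Y; [exact U1|exact U2]|exact Uxy]|].
  apply meet_join_le; auto.
  + apply (le_trans A H _ (f_and A t1 x)); [|exact E1]. apply meet_mono; auto. apply meet_lb1; auto.
  + apply (le_trans A H _ (f_and A t2 y)); [|exact E2]. apply meet_mono; auto. apply meet_lb2; auto.
Qed.

Section Fr.
End Fr.

Definition World A gamma := { w : M A -> Prop | isWorld A gamma w }.
Definition Rw A gamma (u v : World A gamma) := forall z, proj1_sig u z -> proj1_sig v z.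

Lemma world_eq A gamma (u v : World A gamma) : Rw A gamma u v -> Rw A gamma v u -> u = v.
Proof.
  destruct u as [u Hu], v as [v Hv]. unfold Rw; simpl. intros E1 E2.
  assert (u = v). { extensionality z. apply propositional_extensionality; split; auto. }
  subst. f_equal. apply proof_irrelevance.
Qed.

Lemma wB_world A (HA : is_L5_model A) gamma : isWorld A gamma (fun z => z = f_top A).
Proof.
  assert (H : is_heyting A) by apply HA.
  split; [split; [|split; [|split]] | split].
  - intros z ->. apply inS_top; auto.
  - reflexivity.
  - intros x y -> E _. apply le_antisym; auto. apply le_top; auto.
  - intros x y -> ->. apply meet_idem; auto.
  - intro E. apply (top_ne_bot A HA). auto.
  - intros x y E _ _. apply join_top; auto.
Qed.

Lemma wT_world A (HA : is_L5_model A) gamma : isWorld A gamma (fun z => TRUE A z /\ inS A gamma z).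
Proof.
  assert (H : is_heyting A) by apply HA.
  destruct HA as (_&HU&_). pose proof HU as [[(T1&T2&T3) Tb] _].
  split; [split; [|split; [|split]] | split].
  - intros z [_ ?]; auto.
  - split; auto. apply inS_top; auto.
  - intros x y [Tx _] E Sy. split; eauto.
  - intros x y [Tx Sx] [Ty Sy]. split; auto. apply inS_and; auto.
  - intros [? _]; auto.
  - intros x y [Txy _] Sx Sy. destruct (uf_prime A H _ HU x y Txy); auto.
Qed.

Definition wB A (HA : is_L5_model A) gamma : World A gamma := exist _ _ (wB_world A HA gamma).
Definition wT A (HA : is_L5_model A) gamma : World A gamma := exist _ _ (wT_world A HA gamma).

Lemma world_top A (H : is_heyting A) gamma (w : World A gamma) : proj1_sig w (f_top A).
Proof. destruct (proj2_sig w) as (( _ & X & _ ) & _). exact X. Qed.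

Lemma frame_ok A (HA : is_L5_model A) gamma :
  is_L5_frame (World A gamma) (Rw A gamma) (wB A HA gamma).
Proof.
  assert (H : is_heyting A) by apply HA.
  split; [|split; [|split; [|split]]].
  - intros w z Hz; exact Hz.
  - intros u v w E1 E2 z Hz; auto.
  - apply world_eq.
  - intros w z Hz. simpl in Hz. subst. apply world_top; auto.
  - intros C HC.
    set (U := fun z => z = f_top A \/ exists w, C w /\ proj1_sig w z).
    assert (UW : isWorld A gamma U).
    { split; [split; [|split; [|split]] | split].
      - intros z [->|[w [_ Hw]]]. apply inS_top; auto.
        destruct (proj2_sig w) as ((X&_)&_); auto.
      - left; auto.
      - intros x y [->|[w [Cw Hw]]] E Sy.
        + left. apply le_antisym; auto. apply le_top; auto.
        + right. exists w. split; auto. destruct (proj2_sig w) as ((_&_&X&_)&_). eauto.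
      - intros x y [->|[w [Cw Hw]]] [->|[w' [Cw' Hw']]].
        + left. apply meet_idem; auto.
        + right. exists w'. split; auto. rewrite top_meet; auto.
        + right. exists w. split; auto. rewrite meet_comm, top_meet; auto.
        + right. destruct (HC w w' Cw Cw') as [R1|R1].
          * exists w'. split; auto. destruct (proj2_sig w') as ((_&_&_&X)&_). auto.
          * exists w. split; auto. destruct (proj2_sig w) as ((_&_&_&X)&_). auto.
      - intros [E|[w [_ Hw]]]. apply (top_ne_bot A HA); auto.
        destruct (proj2_sig w) as (_&X&_). auto.
      - intros x y [E|[w [Cw Hw]]] Sx Sy.
        + destruct (join_top A HA x y E); [left|right]; left; auto.
        + pose proof (proj2_sig w) as (_&_&X).
          destruct (X x y Hw Sx Sy); [left|right]; right; exists w; auto. }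
    exists (exist _ U UW). intros x Cx z Hz. simpl. right. exists x. auto.
Qed.

Definition gA A gamma (x : var) (w : World A gamma) : Prop := proj1_sig w (gamma x).

Lemma box_eval A (HA : is_L5_model A) gamma (w : World A gamma) a :
  proj1_sig w (f_box A a) <-> a = f_top A.
Proof.
  assert (H : is_heyting A) by apply HA.
  destruct (box_char A HA a) as [B1 B2]. split.
  - intro Hw. apply NNPP. intro N. rewrite B2 in Hw; auto.
    destruct (proj2_sig w) as (_&X&_). auto.
  - intro E. rewrite B1; auto. apply world_top; auto.
Qed.

Lemma truth A (HA : is_L5_model A) gamma : forall p (w : World A gamma),
  ksat (Rw A gamma) (wB A HA gamma) (gA A gamma) w p <-> proj1_sig w (eval A gamma p).
Proof.
  assert (H : is_heyting A) by apply HA.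
  induction p; intro w; simpl.
  - unfold gA. tauto.
  - destruct (proj2_sig w) as (_&X&_). tauto.
  - rewrite IHp1, IHp2. destruct (proj2_sig w) as ((S1&_&X&Y)&_). split.
    + intros [? ?]; auto.
    + intro Hw. split; eapply X; eauto; first [solve [apply meet_lb1; auto] | solve [apply meet_lb2; auto] | solve [apply join_ub1; auto] | solve [apply join_ub2; auto] | solve [apply inS_eval] | solve [apply inS_or; apply inS_eval]].
  - rewrite IHp1, IHp2. destruct (proj2_sig w) as ((S1&_&X&Y)&_&P). split.
    + intros [Hw|Hw]; eapply X; eauto; first [solve [apply meet_lb1; auto] | solve [apply meet_lb2; auto] | solve [apply join_ub1; auto] | solve [apply join_ub2; auto] | solve [apply inS_eval] | solve [apply inS_or; apply inS_eval]].
    + intro Hw. apply P; auto; apply inS_eval.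
  - split.
    + intro K. apply NNPP. intro N.
      set (a := eval A gamma p1). set (b := eval A gamma p2).
      set (F := gen A (inS A gamma) (proj1_sig w) a).
      destruct (proj2_sig w) as (WF&_&_).
      assert (FF : Filt A (inS A gamma) F).
      { apply gen_filt; auto. apply inS_top; auto. apply inS_and. }
      assert (Fb : ~ F b).
      { intros [_ [g [Wg E]]]. apply N. apply resid in E; auto.
        destruct WF as (_&_&X&_). eapply X; eauto. apply inS_imp; apply inS_eval. }
      destruct (lindenbaum A H gamma F b FF Fb (inS_eval _ _ _)) as [G [GW [GI Gb]]].
      apply Gb. apply (IHp2 (exist _ G GW)). apply K.
      * intros z Hz. apply GI. apply gen_incl; auto.
      * apply (IHp1 (exist _ G GW)). simpl. apply GI. apply gen_c; auto. apply inS_eval.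
    + intros Hw w' E Hp. apply IHp2. apply IHp1 in Hp. apply E in Hw.
      destruct (proj2_sig w') as ((_&_&X&Y)&_).
      eapply X; [apply Y; [exact Hp|exact Hw]| |apply inS_eval]. apply mp_le; auto.
  - rewrite IHp. simpl. rewrite box_eval; auto. tauto.
Qed.

Theorem theorem5p2 (A : L5Model) (HA : is_L5_model A) (gamma : var -> M A) :
  exists (W : Type) (R : W -> W -> Prop) (wB : W),
    is_L5_frame W R wB /\
    exists wT : W,
      (forall w, R wT w -> w = wT) /\
      exists g : var -> W -> Prop,
        is_frame_assignment R g /\
        forall phi : formula, msat A gamma phi <-> ksat R wB g wT phi.
Proof.
  assert (H : is_heyting A) by apply HA.
  exists (World A gamma), (Rw A gamma), (wB A HA gamma).
  split. apply frame_ok.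
  exists (wT A HA gamma). split.
  - intros w E. apply world_eq; auto.
    intros z Hz. simpl. split; [|destruct (proj2_sig w) as ((X&_)&_); auto].
    apply NNPP. intro Nz.
    pose proof HA as (_&HU&_).
    destruct (uf_gen A H _ HU z Nz) as [t [Tt Et]].
    apply resid in Et; auto.
    pose proof HU as [[(T1&T2&T3) _] _].
    assert (Sz : inS A gamma z) by (destruct (proj2_sig w) as ((X&_)&_); auto).
    assert (Wi : proj1_sig w (f_imp A z (f_bot A))).
    { apply E. simpl. split. apply (T2 t); auto. apply inS_imp; auto. exists FBot; reflexivity. }
    destruct (proj2_sig w) as ((_&_&X&Y)&Nb&_). apply Nb.
    eapply X; [apply Y; [exact Hz|exact Wi]| |exists FBot; reflexivity]. apply mp_le; auto.
  - exists (gA A gamma). split.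
    + intros x u v E Hu. apply E. exact Hu.
    + intro phi. rewrite truth. simpl. unfold msat. split; [intro; split; auto; apply inS_eval|tauto].
Qed.
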